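(* Let $p$ and $q$ be distinct odd primes, let $a,b$ be nonnegative integers, and set $c=\lfloor (a+1)/(b+2)\rfloor$. If $q<p^c$, then $p^aq^b$ reduces to $p^{a-c}q^{b+1}$.
   Context: For a positive integer $n$, $\mathcal{D}(n)$ is the set of positive divisors of $n$, and $\lambda(n)$ is the least prime factor of $n$ if $n\ge2$, with $\lambda(1)=1$. For positive integers $m,n$, a function $f:\mathcal{D}(n)\to\mathcal{D}(m)$ is called reducing if for all $d,d'\in\mathcal{D}(n)$: (a) $f(d)\le d$; (b) $\frac{m/f(d)}{n/d}\le\min\{1,\ \lambda(m/f(d))/\lambda(n/d)\}$; (c) if $f(d)=2^if(d')$ for some $i\in\mathbb{Z}$, then $d=2^jd'$ for some $j\in\mathbb{Z}$. We say $n$ reduces to $m$ if a reducing function $\mathcal{D}(n)\to\mathcal{D}(m)$ exists. *)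

(* Defs.v *)
From mathcomp Require Import all_boot all_order all_algebra.
Set Implicit Arguments. Unset Strict Implicit. Unset Printing Implicit Defensive.
Import Order.TTheory GRing.Theory Num.Theory.

(* lambda n : least prime factor of n for n >= 2, and lambda 1 = 1.
   mathcomp's pdiv n is the smallest prime divisor of n > 1, else 1. *)
Definition lambda (n : nat) : nat := pdiv n.

Local Open Scope ring_scope.

(* A function f : D(n) -> D(m), represented as f : nat -> nat whose values
   on divisors of n are divisors of m; only its values on D(n) matter. *)
Definition reducing (n m : nat) (f : nat -> nat) : Prop :=
  (forall d, (d %| n)%N -> (f d %| m)%N) /\
  (forall d, (d %| n)%N -> (f d <= d)%N) /\
  (forall d, (d %| n)%N ->
     let r : rat := ((m %/ f d)%:R / (n %/ d)%:R) in
     r <= Num.min 1 ((lambda (m %/ f d))%:R / (lambda (n %/ d))%:R)) /\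
  (forall d d', (d %| n)%N -> (d' %| n)%N ->
     (exists i : int, (f d)%:R = (2%:R : rat) ^ i * (f d')%:R) ->
     (exists j : int, d%:R = (2%:R : rat) ^ j * d'%:R)).

Definition reduces_to (n m : nat) : Prop := exists f, reducing n m f.

(* Main.v *)
Require Import Defs.
From mathcomp Require Import all_boot all_order all_algebra.
From mathcomp Require Import zify ring.
Import Order.TTheory GRing.Theory Num.Theory.

Lemma logpq p q i j : prime p -> prime q -> p != q ->
  logn p (p ^ i * q ^ j) = i /\ logn q (p ^ i * q ^ j) = j.
Proof.
move=> pp pq npq.
rewrite !lognM ?expn_gt0 ?prime_gt0 // !lognX !logn_prime // !eqxx.
by rewrite (negbTE npq) eq_sym (negbTE npq) !muln0 !muln1 addn0.
Qed.

Lemma decomp p q a b d : prime p -> prime q -> p != q -> d %| p ^ a * q ^ b ->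
  [/\ d = p ^ logn p d * q ^ logn q d, logn p d <= a & logn q d <= b].
Proof.
move=> pp pq npq dn.
have n0 : 0 < p ^ a * q ^ b by rewrite muln_gt0 !expn_gt0 !prime_gt0.
have d0 : 0 < d by apply: dvdn_gt0 dn.
have [la lb] := logpq _ _ a b pp pq npq.
split; last first.
- by rewrite -[X in _ <= X]lb dvdn_leq_log.
- by rewrite -[X in _ <= X]la dvdn_leq_log.
apply: eqn_from_log => //; first by rewrite muln_gt0 !expn_gt0 !prime_gt0.
move=> r.
have [ip iq] := logpq _ _ (logn p d) (logn q d) pp pq npq.
case: (eqVneq r p) => [->|rp]; first by rewrite ip.
case: (eqVneq r q) => [->|rq]; first by rewrite iq.
rewrite lognM ?expn_gt0 ?prime_gt0 // !lognX (logn_prime r pp) (logn_prime r pq) (negbTE rp) (negbTE rq) !muln0.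
apply/eqP; rewrite -leqn0.
have := dvdn_leq_log r n0 dn.
by rewrite lognM ?expn_gt0 ?prime_gt0 // !lognX (logn_prime r pp) (logn_prime r pq) (negbTE rp) (negbTE rq) !muln0.
Qed.

Lemma divpq p q x y i j : prime p -> prime q -> i <= x -> j <= y ->
  (p ^ x * q ^ y) %/ (p ^ i * q ^ j) = p ^ (x - i) * q ^ (y - j).
Proof.
move=> pp pq ix jy.
have -> : p ^ x * q ^ y = (p ^ i * q ^ j) * (p ^ (x - i) * q ^ (y - j)).
  by rewrite -{1}(subnKC ix) -{1}(subnKC jy) !expnD; ring.
by rewrite mulKn // muln_gt0 !expn_gt0 !prime_gt0.
Qed.

Lemma pdiv_pq p q x y : prime p -> prime q -> 0 < x + y ->
  pdiv (p ^ x * q ^ y) = p \/ pdiv (p ^ x * q ^ y) = q.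
Proof.
move=> pp pq xy.
have N1 : 1 < p ^ x * q ^ y.
  case: x xy => [|x] /=; case: y => [|y] //= _.
  - by rewrite expn0 mul1n -(expn0 q) ltn_exp2l ?prime_gt1.
  - by rewrite expn0 muln1 -(expn0 p) ltn_exp2l ?prime_gt1.
  - rewrite (@leq_trans (p ^ x.+1)) //; first by rewrite -(expn0 p) ltn_exp2l ?prime_gt1.
    by rewrite leq_pmulr // expn_gt0 prime_gt0.
have pr := pdiv_prime N1.
have := pdiv_dvd (p ^ x * q ^ y).
rewrite Euclid_dvdM // !Euclid_dvdX // !dvdn_prime2 //.
by case/orP => /andP [/eqP -> _]; [left|right].
Qed.

Lemma pdiv_lep p q x y : prime p -> 0 < x -> pdiv (p ^ x * q ^ y) <= p.
Proof.
move=> pp x0; apply: pdiv_min_dvd; first by rewrite prime_gt1.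
by apply: dvdn_mulr; rewrite dvdn_exp.
Qed.

Local Open Scope ring_scope.

Lemma rat_ineq (M N lM lN : nat) : (0 < N)%N -> (0 < lN)%N -> (M <= N)%N ->
  (M * lN <= lM * N)%N ->
  (M%:R / N%:R : rat) <= Num.min 1 (lM%:R / lN%:R).
Proof.
move=> N0 lN0 MN H.
rewrite le_min; apply/andP; split.
  by rewrite ler_pdivrMr ?ltr0n // mul1r ler_nat.
rewrite ler_pdivrMr ?ltr0n // mulrAC ler_pdivlMr ?ltr0n // -!natrM ler_nat.
by [].
Qed.

Lemma two_pow (x y : nat) (i : int) : odd x -> odd y ->
  x%:R = (2%:R : rat) ^ i * y%:R -> x = y.
Proof.
move=> ox oy; case: i => k /= H.
  have : x = (2 ^ k * y)%N by apply/eqP; rewrite -(eqr_nat rat) natrM natrX H.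
  case: k {H} => [|k]; first by rewrite mul1n.
  by move=> E; move: ox; rewrite E oddM oddX.
have : y = (2 ^ k.+1 * x)%N.
  apply/eqP; rewrite -(eqr_nat rat) natrM natrX H mulrA mulfV ?mul1r //.
  by rewrite expf_neq0 // pnatr_eq0.
by move=> E; move: oy; rewrite E oddM oddX.
Qed.

Local Close Scope ring_scope.

Theorem lemma3p8 (p q a b : nat) :
  prime p -> prime q -> odd p -> odd q -> p != q ->
  let c := ((a + 1) %/ (b + 2))%N in
  (q < p ^ c)%N ->
  reduces_to (p ^ a * q ^ b) (p ^ (a - c) * q ^ b.+1).
Proof.
move=> pp pq op oq npq c hc.
have c0 : 0 < c.
  case: (posnP c) => [c0|//]; move: hc; rewrite c0 expn0 ltnS leqn0 => /eqP q0.
  by rewrite q0 in pq.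
have cb : c * (b + 2) <= a + 1 by rewrite /c leq_trunc_div.
have cbE : c * (b + 2) = c * b.+1 + c by rewrite addn2 mulnS addnC.
pose X i j := if i < c * (b.+1 - j) then i else i - c.
pose Y i j := if i < c * (b.+1 - j) then j else j.+1.
pose f d := p ^ X (logn p d) (logn q d) * q ^ Y (logn p d) (logn q d).
have fE i j : f (p ^ i * q ^ j) = p ^ X i j * q ^ Y i j.
  by rewrite /f; have [-> ->] := logpq _ _ i j pp pq npq.
have key d : d %| p ^ a * q ^ b -> exists i j, [/\ i <= a, j <= b & d = p ^ i * q ^ j].
  move=> dn; have [E la lb] := decomp _ _ _ _ _ pp pq npq dn.
  by exists (logn p d), (logn q d).
have H1 i j : i < c * (b.+1 - j) -> i <= a - c.
  move=> h; have : c * (b.+1 - j) <= c * b.+1 by rewrite leq_mul2l leq_subr orbT.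
  lia.
have H2 i j : j <= b -> ~~ (i < c * (b.+1 - j)) -> c <= i.
  move=> jb; rewrite -leqNgt; apply: leq_trans.
  by rewrite leq_pmulr // subn_gt0 ltnS.
have XYb i j : i <= a -> j <= b -> X i j <= a - c /\ Y i j <= b.+1.
  move=> ia jb; rewrite /X /Y; case: ifP => h.
    by split; [apply: (H1 i j) | lia].
  have := H2 i j jb (negbT h); lia.
have pos x y : 0 < p ^ x * q ^ y by rewrite muln_gt0 !expn_gt0 !prime_gt0.
have oddf x y : odd (p ^ x * q ^ y) by rewrite oddM !oddX op oq !orbT.
exists f; split; [|split; [|split]].
- move=> d /key [i [j [ia jb ->]]]; rewrite fE.
  have [hx hy] := XYb i j ia jb.
  by rewrite dvdn_mul // dvdn_exp2l.
- move=> d /key [i [j [ia jb ->]]]; rewrite fE /X /Y; case: ifP => h //.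
  have ci := H2 i j jb (negbT h).
  rewrite -{2}(subnK ci) expnD expnS -mulnA leq_mul2l; apply/orP; right.
  by rewrite leq_mul2r ltnW // orbT.
- move=> d /key [i [j [ia jb ->]]] /=; rewrite fE.
  have [hx hy] := XYb i j ia jb.
  rewrite !(divpq _ _ _ _ _ _ pp pq) // /lambda.
  move: hx hy; rewrite /X /Y; case: ifP => h hx hy.
  + have ic := H1 i j h.
    set x := a - c - i; set y := b - j.
    have -> : a - i = x + c by rewrite /x; lia.
    have -> : b.+1 - j = y.+1 by rewrite /y; lia.
    have pc : 0 < p ^ c by rewrite expn_gt0 prime_gt0.
    have E : p ^ x * q ^ y.+1 * p ^ c = p ^ (x + c) * q ^ y * q.
      by rewrite expnD expnS; ring.
    apply: rat_ineq; first exact: pos; first exact: pdiv_gt0.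
    * rewrite -(leq_pmul2r pc) E leq_mul2l ltnW ?orbT //.
    * rewrite -(leq_pmul2r pc) mulnAC E.
      have lN : pdiv (p ^ (x + c) * q ^ y) <= p by apply: (pdiv_lep _ _ _ _ pp); lia.
      have lNc : pdiv (p ^ (x + c) * q ^ y) <= p ^ c.
        apply: (leq_trans lN); rewrite -{1}(expn1 p) leq_pexp2l // prime_gt0 //.
      rewrite -mulnA [_ * (p ^ (x + c) * _)]mulnC -[X in _ <= X]mulnA leq_mul2l; apply/orP; right.
      have : 0 < x + y.+1 by rewrite addnS.
      case/(pdiv_pq _ _ _ _ pp pq) => ->.
      - by rewrite mulnC leq_mul // ltnW.
      - by rewrite leq_mul2l lNc orbT.
  + have ci := H2 i j jb (negbT h).
    rewrite (_ : a - c - (i - c) = a - i); last by lia.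
    rewrite subSS; apply: rat_ineq => //.
    by rewrite mulnC.
- move=> d d' /key [i [j [ia jb ->]]] /key [i' [j' [ia' jb' ->]]] [k].
  rewrite !fE => Hk; have E := two_pow _ _ _ (oddf _ _) (oddf _ _) Hk.
  have [e1 e2] := logpq _ _ (X i j) (Y i j) pp pq npq.
  have [e3 e4] := logpq _ _ (X i' j') (Y i' j') pp pq npq.
  rewrite E in e1 e2.
  have eX : X i j = X i' j' by rewrite -e1 e3.
  have eY : Y i j = Y i' j' by rewrite -e2 e4.
  have [-> ->] : i = i' /\ j = j'.
    move: eX eY; rewrite /X /Y; case: ifP => h; case: ifP => h' eX eY.
    - by split.
    - have hh := H2 i' j' jb' (negbT h').
      move: h' h; rewrite eY.
      have -> : b.+1 - j' = (b.+1 - j'.+1).+1 by lia.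
      rewrite mulnS; lia.
    - have hh := H2 i j jb (negbT h).
      move: h h'; rewrite -eY.
      have -> : b.+1 - j = (b.+1 - j.+1).+1 by lia.
      rewrite mulnS; lia.
    - have := H2 i j jb (negbT h); have := H2 i' j' jb' (negbT h'); lia.
  by exists 0; rewrite expr0z mul1r.
Qed.
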